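(* Let $(a_n)_{n=1}^\infty$ and $(A_n)_{n=1}^\infty$ be sequences of real numbers such that (i) $0<a_{n+1}\le a_n/3$ for all $n\in\mathbb{N}$, and (ii) $\sum_{n=1}^\infty|A_n|/a_n<\infty$. Then the function $f$ on $[0,a_1]$ defined by $$f(x)=\frac{A_n-A_{n+1}}{a_n-a_{n+1}}(x-a_{n+1})+A_{n+1}\ \text{ if } x\in(a_{n+1},a_n],\qquad f(0)=0,$$ is a DCR function on $[0,a_1]$.
   Context: A function on an open interval is DC if it is the difference of two convex functions. A function defined on a nonempty set $D\subset\mathbb{R}$ is DCR if it is the restriction of a DC function defined on $\mathbb{R}$. *)

(* Defs.v *)
From Stdlib Require Import Reals.
From Coquelicot Require Import Coquelicot.
Open Scope R_scope.

Definition convex_on (I : R -> Prop) (f : R -> R) : Prop :=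
  forall x y t, I x -> I y -> 0 <= t <= 1 ->
    f (t * x + (1 - t) * y) <= t * f x + (1 - t) * f y.

Definition DC_on (I : R -> Prop) (g : R -> R) : Prop :=
  exists g1 g2 : R -> R, convex_on I g1 /\ convex_on I g2 /\
    forall x, I x -> g x = g1 x - g2 x.

Definition DCR (D : R -> Prop) (f : R -> R) : Prop :=
  (exists x, D x) /\
  exists g : R -> R, DC_on (fun _ => True) g /\ forall x, D x -> f x = g x.

(* Main.v *)
Require Import Defs.
From Stdlib Require Import Reals Lra Lia Psatz.
From Coquelicot Require Import Coquelicot.
Open Scope R_scope.

Lemma hinge_convex (b x y t : R) : 0 <= t <= 1 ->
  Rmax 0 (t*x+(1-t)*y - b) <= t*Rmax 0 (x-b) + (1-t)*Rmax 0 (y-b).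
Proof. intros Ht. unfold Rmax; repeat destruct Rle_dec; nra. Qed.

Lemma hinge_bound (b x : R) : 0 < b -> 0 <= Rmax 0 (x - b) <= Rabs x.
Proof. intros Hb. unfold Rmax, Rabs; destruct Rle_dec; destruct Rcase_abs; lra. Qed.

Lemma ex_hinge (p b : nat -> R) (x : R) : (forall n, 0 <= p n) -> (forall n, 0 < b n) ->
  ex_series p -> ex_series (fun n => p n * Rmax 0 (x - b n)).
Proof.
  intros Hp Hb Hs.
  apply (@ex_series_le R_AbsRing R_CompleteNormedModule _ (fun n => p n * Rabs x)).
  - intros n. change (Rabs (p n * Rmax 0 (x - b n)) <= p n * Rabs x).
    rewrite Rabs_mult, (Rabs_pos_eq (p n)) by auto.
    destruct (hinge_bound (b n) x (Hb n)) as [H1 H2].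
    rewrite Rabs_pos_eq by auto. apply Rmult_le_compat_l; auto.
  - apply ex_series_scal_r; auto.
Qed.

Lemma series_convex (p b : nat -> R) : (forall n, 0 <= p n) -> (forall n, 0 < b n) ->
  ex_series p -> convex_on (fun _ => True) (fun x => Series (fun n => p n * Rmax 0 (x - b n))).
Proof.
  intros Hp Hb Hs x y t _ _ Ht.
  assert (Ex := ex_hinge p b x Hp Hb Hs).
  assert (Ey := ex_hinge p b y Hp Hb Hs).
  assert (E1 : ex_series (fun n => t * (p n * Rmax 0 (x - b n)))) by exact (ex_series_scal_l t _ Ex).
  assert (E2 : ex_series (fun n => (1-t) * (p n * Rmax 0 (y - b n)))) by exact (ex_series_scal_l (1-t) _ Ey).
  eapply Rle_trans.
  - apply (Series_le _ (fun n => t * (p n * Rmax 0 (x - b n)) + (1-t) * (p n * Rmax 0 (y - b n)))).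
    + intros n. split.
      * apply Rmult_le_pos; auto. apply Rmax_l.
      * pose proof (hinge_convex (b n) x y t Ht). pose proof (Hp n). nra.
    + exact (ex_series_plus _ _ E1 E2).
  - rewrite Series_plus by auto. rewrite !Series_scal_l. lra.
Qed.

Definition sl (a A : nat -> R) n := (A n - A (S n)) / (a n - a (S n)).
Definition cl (a A : nat -> R) n := sl a A n - sl a A (S n).

Theorem lemma4p1 (a A : nat -> R) (f : R -> R)
  (hpos : forall n, 0 < a (S n))
  (hdec : forall n, a (S n) <= a n / 3)
  (hsum : ex_series (fun n => Rabs (A n) / a n))
  (hf0 : f 0 = 0)
  (hf : forall n x, a (S n) < x <= a n ->
      f x = (A n - A (S n)) / (a n - a (S n)) * (x - a (S n)) + A (S n)) :
  DCR (fun x => 0 <= x <= a O) f.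
Proof.
  assert (apos : forall n, 0 < a n).
  { intros [|n]; [pose proof (hpos 0%nat); pose proof (hdec 0%nat); lra | apply hpos]. }
  assert (adiff : forall n, a (S n) < a n).
  { intros n; pose proof (apos n); pose proof (hdec n); lra. }
  assert (amono : forall i j, (i <= j)%nat -> a j <= a i).
  { intros i j Hij. replace j with ((j - i) + i)%nat by lia.
    induction (j - i)%nat as [|k IH]; simpl; [lra|]. pose proof (adiff (k + i)%nat); lra. }
  assert (ageom : forall n, a n <= a 0%nat * (1/3)^n).
  { induction n; simpl; [lra|]. pose proof (hdec n). lra. }
  assert (alim : is_lim_seq a 0).
  { apply (is_lim_seq_le_le (fun _ => 0) a (fun n => a 0%nat * (1/3)^n)).
    - intros n; split; [left; apply apos| apply ageom].
    - apply is_lim_seq_const.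
    - assert (Hg := is_lim_seq_geom (1/3)). 
      assert (H := is_lim_seq_mult' _ _ _ _ (is_lim_seq_const (a 0%nat)) (Hg ltac:(rewrite Rabs_pos_eq; lra))).
      rewrite Rmult_0_r in H. exact H. }
  assert (Alim : is_lim_seq A 0).
  { apply is_lim_seq_abs_0.
    apply (is_lim_seq_ext (fun n => a n * (Rabs (A n) / a n))).
    - intros n. field. pose proof (apos n); lra.
    - assert (H := is_lim_seq_mult' _ _ _ _ alim (ex_series_lim_0 _ hsum)).
      rewrite Rmult_0_l in H. exact H. }
  assert (sbound : forall n, Rabs (sl a A n) <= 3/2 * (Rabs (A n) / a n) + 3/2 * (Rabs (A (S n)) / a (S n))).
  { intros n. unfold sl. pose proof (apos n). pose proof (apos (S n)). pose proof (hdec n).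
    set (u := Rabs (A n) / a n). set (v := Rabs (A (S n)) / a (S n)).
    assert (Hu : Rabs (A n) = u * a n) by (unfold u; field; lra).
    assert (Hv : Rabs (A (S n)) = v * a (S n)) by (unfold v; field; lra).
    assert (u0 : 0 <= u) by (unfold u; apply Rdiv_le_0_compat; [apply Rabs_pos| lra]).
    assert (v0 : 0 <= v) by (unfold v; apply Rdiv_le_0_compat; [apply Rabs_pos| lra]).
    rewrite Rabs_div by lra. rewrite (Rabs_pos_eq (a n - a (S n))) by lra.
    apply Rmult_le_reg_r with (a n - a (S n)); [lra|].
    unfold Rdiv at 1. rewrite Rmult_assoc, Rinv_l, Rmult_1_r by lra.
    assert (Rabs (A n - A (S n)) <= Rabs (A n) + Rabs (A (S n))).
    { unfold Rminus. eapply Rle_trans; [apply Rabs_triang|]. rewrite Rabs_Ropp; lra. }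
    nra. }
  assert (sabs : ex_series (fun n => Rabs (sl a A n))).
  { apply (@ex_series_le R_AbsRing R_CompleteNormedModule _ (fun n => 3/2 * (Rabs (A n) / a n) + 3/2 * (Rabs (A (S n)) / a (S n)))).
    - intros n. change (Rabs (Rabs (sl a A n)) <= 3/2 * (Rabs (A n) / a n) + 3/2 * (Rabs (A (S n)) / a (S n))).
      rewrite Rabs_Rabsolu. apply sbound.
    - assert (E1 := ex_series_scal_l (3/2) _ hsum).
      assert (E2 := ex_series_scal_l (3/2) _ (proj1 (ex_series_incr_1 _) hsum)).
      exact (ex_series_plus _ _ E1 E2). }
  assert (slim : is_lim_seq (sl a A) 0).
  { apply is_lim_seq_abs_0. apply ex_series_lim_0. exact sabs. }
  assert (cabs : ex_series (fun n => Rabs (cl a A n))).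
  { apply (@ex_series_le R_AbsRing R_CompleteNormedModule _ (fun n => Rabs (sl a A n) + Rabs (sl a A (S n)))).
    - intros n. change (Rabs (Rabs (cl a A n)) <= Rabs (sl a A n) + Rabs (sl a A (S n))).
      rewrite Rabs_Rabsolu. unfold cl, Rminus. eapply Rle_trans; [apply Rabs_triang|]. rewrite Rabs_Ropp; lra.
    - exact (ex_series_plus _ _ sabs (proj1 (ex_series_incr_1 _) sabs)). }
  set (p := fun n => Rmax 0 (cl a A n)).
  set (q := fun n => Rmax 0 (- cl a A n)).
  assert (p0 : forall n, 0 <= p n) by (intros; apply Rmax_l).
  assert (q0 : forall n, 0 <= q n) by (intros; apply Rmax_l).
  assert (pex : ex_series p).
  { apply (@ex_series_le R_AbsRing R_CompleteNormedModule _ (fun n => Rabs (cl a A n))); [intros n|exact cabs]. change (Rabs (p n) <= Rabs (cl a A n)).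
    unfold p, Rmax, Rabs; repeat destruct Rle_dec; repeat destruct Rcase_abs; lra. }
  assert (qex : ex_series q).
  { apply (@ex_series_le R_AbsRing R_CompleteNormedModule _ (fun n => Rabs (cl a A n))); [intros n|exact cabs]. change (Rabs (q n) <= Rabs (cl a A n)).
    unfold q, Rmax, Rabs; repeat destruct Rle_dec; repeat destruct Rcase_abs; lra. }
  assert (bpos : forall n, 0 < a (S n)) by (intros; apply apos).
  set (g1 := fun x => Series (fun n => p n * Rmax 0 (x - a (S n)))).
  set (g2 := fun x => Series (fun n => q n * Rmax 0 (x - a (S n)))).
  split.
  { exists 0. pose proof (apos 0%nat). lra. }
  exists (fun x => g1 x - g2 x). split.
  { exists g1, g2. split; [exact (series_convex p (fun n => a (S n)) p0 bpos pex)|].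
    split; [exact (series_convex q (fun n => a (S n)) q0 bpos qex)| reflexivity]. }
  intros x Hx. unfold g1, g2.
  rewrite <- Series_minus by (apply ex_hinge; auto).
  destruct (Req_dec x 0) as [Hx0|Hx0].
  { subst x. rewrite hf0.
    rewrite (Series_ext _ (fun n => 0 * 0)).
    - rewrite (Series_scal_l 0 (fun _ => 0)). ring.
    - intros n. assert (Rmax 0 (0 - a (S n)) = 0) as ->.
      { pose proof (apos (S n)). unfold Rmax; destruct Rle_dec; lra. }
      ring. }
  assert (xpos : 0 < x) by lra.
  assert (exk : exists k, a k < x).
  { destruct (proj2 (is_lim_seq_spec _ _) alim (mkposreal x xpos)) as [N HN].
    exists N. specialize (HN N (Nat.le_refl _)). simpl in HN.
    revert HN. unfold Rabs; destruct Rcase_abs; lra. }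
  assert (findm : forall k, a k < x -> exists m, a (S m) < x <= a m).
  { induction k as [|k IH]; intros Hk; [lra|].
    destruct (Rlt_or_le (a k) x) as [H|H]; [apply IH; auto| exists k; lra]. }
  destruct exk as [k Hk]. destruct (findm k Hk) as [m Hm].
  rewrite (hf m x Hm). symmetry. apply is_series_unique.
  set (F := fun n => p n * Rmax 0 (x - a (S n)) - q n * Rmax 0 (x - a (S n))).
  assert (Fc : forall n, F n = cl a A n * Rmax 0 (x - a (S n))).
  { intros n. unfold F. assert (p n - q n = cl a A n) as E.
    { unfold p, q, Rmax. repeat destruct Rle_dec; lra. }
    rewrite <- E. ring. }
  assert (hzero : forall n, (n < m)%nat -> F n = 0).
  { intros n Hn. rewrite Fc. assert (a m <= a (S n)) by (apply amono; lia).
    assert (Rmax 0 (x - a (S n)) = 0) as -> by (unfold Rmax; destruct Rle_dec; lra). ring. }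
  assert (szero : forall N, (N < m)%nat -> sum_n F N = 0).
  { induction N; intros HN.
    - rewrite sum_O. apply hzero; lia.
    - rewrite sum_Sn, IHN by lia. rewrite hzero by lia. change (0 + 0 = 0). ring. }
  set (K := sl a A m * (x - a (S m)) + A (S m)).
  assert (formula : forall k, sum_n F (k + m) = K - A (S (k + m)) - sl a A (S (k+m)) * (x - a (S (k + m)))).
  { clear k Hk. induction k as [|k IH].
    - change (0 + m)%nat with m. assert (sum_n F m = F m) as ->.
      { destruct m as [|m']; [apply sum_O|]. rewrite sum_Sn, szero by lia. change (0 + F (S m') = F (S m')). ring. }
      rewrite Fc. assert (Rmax 0 (x - a (S m)) = x - a (S m)) as -> by (unfold Rmax; destruct Rle_dec; lra).
      unfold K, cl. match goal with |- ?l = ?r => change (@eq R l r) end. ring.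
    - change (S k + m)%nat with (S (k + m)). rewrite sum_Sn, IH. rewrite Fc.
      assert (a (S (S (k + m))) <= a (S m)) by (apply amono; lia).
      assert (Rmax 0 (x - a (S (S (k+m)))) = x - a (S (S (k+m)))) as -> by (unfold Rmax; destruct Rle_dec; lra).
      assert (Hid : sl a A (S (k+m)) * (a (S (k+m)) - a (S (S (k+m)))) = A (S (k+m)) - A (S (S (k+m)))).
      { unfold sl. field. pose proof (adiff (S (k+m))). lra. }
      change (plus ?u ?v) with (u + v). unfold cl. nra. }
  assert (Hlim : is_lim_seq (fun N => K - A (S N) - sl a A (S N) * (x - a (S N))) K).
  { assert (HA := proj1 (is_lim_seq_incr_1 A 0) Alim).
    assert (Ha := proj1 (is_lim_seq_incr_1 a 0) alim).
    assert (Hs := proj1 (is_lim_seq_incr_1 (sl a A) 0) slim).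
    assert (H2 := is_lim_seq_minus' _ _ _ _ (is_lim_seq_const K) HA).
    assert (H3 := is_lim_seq_minus' _ _ _ _ (is_lim_seq_const x) Ha).
    assert (H4 := is_lim_seq_mult' _ _ _ _ Hs H3).
    assert (H5 := is_lim_seq_minus' _ _ _ _ H2 H4).
    replace (K - 0 - 0 * (x - 0)) with K in H5 by ring. exact H5. }
  assert (Hl2 : is_lim_seq (sum_n F) K).
  { apply (is_lim_seq_ext_loc (fun N => K - A (S N) - sl a A (S N) * (x - a (S N))) (sum_n F) K); [|exact Hlim].
    exists m; intros N HN. replace N with ((N - m) + m)%nat by lia. rewrite formula. reflexivity. }
  exact Hl2.
Qed.
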